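(* Let $A\in\mathcal X$ be such that there exist linearly independent $v_1,\dots,v_n\in\mathbb Z^n$ with $\mathcal S_1(A)=\{\pm v_1,\dots,\pm v_n\}$, let $B$ be the matrix with columns $v_1,\dots,v_n$, and define $g_2:\mathbb R^{n-1}\to S_n$ by $g_2(x)=A\,B\,D(x)\,B^{-1}$, where for $x=(a_1,\dots,a_{n-1})$, $D(x)=\mathrm{diag}(e^{a_1},\dots,e^{a_{n-1}},e^{-a_1-\dots-a_{n-1}})$. Then there is $\epsilon>0$ such that for all $x$ with $|x|<\epsilon$: $g_2(x)\in\mathcal X$ if and only if $x=0$; and if moreover $x\neq0$ and $v\in\mathcal S_1(g_2(x))$, then $\lim_{t\to\infty}l_v(g_2(tx))=0$.
   Context: $S_n=\mathrm{SO}_n\backslash\mathrm{SL}_n\mathbb R$; a point is represented by a matrix up to left $\mathrm{SO}_n$ (here $A$ denotes a representative in $\mathrm{SL}_n\mathbb R$; $ABD(x)B^{-1}\in\mathrm{SL}_n\mathbb R$). For $v\in\mathbb R^n$, $l_v(A)=|Av|$. $\mathrm{syst}_1(A)=\min_{v\in\mathbb Z^n\setminus\{0\}}|Av|$, $\mathcal S_1(A)=\{v\in\mathbb Z^n:|Av|=\mathrm{syst}_1(A)\}$; $A$ is well-rounded if $\mathcal S_1(A)$ spans $\mathbb R^n$, and $\mathcal X$ is the set of well-rounded points. *)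

(* Defs.v *)
From Stdlib Require Import Reals Lra ZArith Arith List.
Open Scope R_scope.

(* Matrices and vectors are represented as functions on indices; only
   indices < n are meaningful for n x n matrices / vectors of R^n. *)
Definition Vec := nat -> R.
Definition Mat := nat -> nat -> R.
Definition ZVec := nat -> Z.

Fixpoint sumR (n : nat) (f : nat -> R) : R :=
  match n with
  | O => 0
  | S m => sumR m f + f m
  end.

Definition mat_vec (n : nat) (A : Mat) (v : Vec) : Vec :=
  fun i => sumR n (fun j => A i j * v j).

Definition mmul (n : nat) (A B : Mat) : Mat :=
  fun i k => sumR n (fun j => A i j * B j k).

Definition vnorm (n : nat) (v : Vec) : R := sqrt (sumR n (fun i => v i ^ 2)).

Definition minor (i j : nat) (A : Mat) : Mat :=
  fun r c => A (if (r <? i)%nat then r else S r) (if (c <? j)%nat then c else S c).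

Fixpoint det (n : nat) (A : Mat) : R :=
  match n with
  | O => 1
  | S m => sumR (S m) (fun j => (-1) ^ j * A 0%nat j * det m (minor 0 j A))
  end.

Definition cofactor (n : nat) (A : Mat) (i j : nat) : R :=
  (-1) ^ (i + j) * det (n - 1) (minor i j A).

Definition inv (n : nat) (A : Mat) : Mat :=
  fun i j => / det n A * cofactor n A j i.

Definition toR (w : ZVec) : Vec := fun i => IZR (w i).

Definition lv (n : nat) (A : Mat) (w : ZVec) : R := vnorm n (mat_vec n A (toR w)).

Definition nonzeroZ (n : nat) (w : ZVec) : Prop :=
  exists i, (i < n)%nat /\ w i <> 0%Z.

Definition in_S1 (n : nat) (A : Mat) (w : ZVec) : Prop :=
  nonzeroZ n w /\ forall u : ZVec, nonzeroZ n u -> lv n A w <= lv n A u.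

(* A is well-rounded: S_1(A) spans R^n (every vector is a finite
   real linear combination of elements of S_1(A)). *)
Definition well_rounded (n : nat) (A : Mat) : Prop :=
  forall y : Vec, exists l : list (R * ZVec),
    Forall (fun p => in_S1 n A (snd p)) l /\
    forall i, (i < n)%nat ->
      y i = fold_right (fun p acc => fst p * IZR (snd p i) + acc) 0 l.

Definition colmat (v : nat -> ZVec) : Mat := fun i k => IZR (v k i).

Definition lin_indep (n : nat) (v : nat -> ZVec) : Prop :=
  forall c : nat -> R,
    (forall i, (i < n)%nat -> sumR n (fun k => c k * IZR (v k i)) = 0) ->
    forall k, (k < n)%nat -> c k = 0.

Definition zeqv (n : nat) (w u : ZVec) : Prop := forall i, (i < n)%nat -> w i = u i.
Definition zopp (u : ZVec) : ZVec := fun i => (- u i)%Z.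

Definition Dmat (n : nat) (x : Vec) : Mat :=
  fun i j => if (i =? j)%nat then
               (if (i <? n - 1)%nat then exp (x i) else exp (- sumR (n - 1) x))
             else 0.

Definition g2 (n : nat) (A : Mat) (v : nat -> ZVec) (x : Vec) : Mat :=
  mmul n (mmul n (mmul n A (colmat v)) (Dmat n x)) (inv n (colmat v)).

Definition vscale (t : R) (x : Vec) : Vec := fun i => t * x i.

(* Main.v *)
From Stdlib Require Import Reals Lra Lia ZArith Arith List Classical ClassicalEpsilon FunctionalExtensionality.
Set Warnings "-redundant-canonical-projection -ambiguous-paths -notation-overridden".
From HB Require Import structures.
From mathcomp Require Import all_boot all_algebra.
Require Import Defs.
Open Scope R_scope.

Definition Req_bool (x y : R) : bool := if Req_EM_T x y then true else false.
Lemma Req_boolP : Equality.axiom Req_bool.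
Proof. move=> x y; rewrite /Req_bool; case: Req_EM_T => H; [left|right]; done. Qed.
HB.instance Definition _ := hasDecEq.Build R Req_boolP.

Definition Rfind (P : pred R) (n : nat) : option R :=
  match excluded_middle_informative (exists x, P x) with
  | left H => Some (proj1_sig (constructive_indefinite_description _ H))
  | right _ => None
  end.
Lemma Rfind_correct P n x : Rfind P n = Some x -> P x.
Proof. rewrite /Rfind; case: excluded_middle_informative => // H [<-].
  exact: (proj2_sig (constructive_indefinite_description _ H)). Qed.
Lemma Rfind_complete (P : pred R) : (exists x, P x) -> exists n, Rfind P n.
Proof. move=> H; exists 0%nat; rewrite /Rfind; case: excluded_middle_informative => //. Qed.
Lemma Rfind_ext (P Q : pred R) : P =1 Q -> Rfind P =1 Rfind Q.
Proof. move=> H n. have E : P = Q by apply: functional_extensionality. by rewrite E. Qed.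
HB.instance Definition _ := hasChoice.Build R Rfind_correct Rfind_complete Rfind_ext.

Lemma R_addA : associative Rplus. Proof. move=> *; lra. Qed.
Lemma R_addC : commutative Rplus. Proof. move=> *; lra. Qed.
Lemma R_add0 : left_id 0 Rplus. Proof. move=> *; lra. Qed.
Lemma R_addN : left_inverse 0 Ropp Rplus. Proof. move=> *; lra. Qed.
HB.instance Definition _ := GRing.isZmodule.Build R R_addA R_addC R_add0 R_addN.
Lemma R_mulA : associative Rmult. Proof. move=> *; ring. Qed.
Lemma R_mulC : commutative Rmult. Proof. move=> *; ring. Qed.
Lemma R_mul1 : left_id 1 Rmult. Proof. move=> *; ring. Qed.
Lemma R_mulD : left_distributive Rmult Rplus. Proof. move=> *; ring. Qed.
Lemma R_10 : (1 != 0 :> R)%B. Proof. apply/eqP; exact R1_neq_R0. Qed.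
HB.instance Definition _ := GRing.Zmodule_isComNzRing.Build R R_mulA R_mulC R_mul1 R_mulD R_10.
Lemma R_mulV (x : R) : (x != 0)%B -> Rinv x * x = 1.
Proof. move/eqP=> H; by rewrite Rinv_l. Qed.
HB.instance Definition _ := GRing.ComNzRing_isField.Build R R_mulV Rinv_0.
Open Scope R_scope.
Definition mx (n : nat) (A : Mat) : 'M[R]_n := \matrix_(i < n, j < n) A i j.
Definition cv (n : nat) (y : Vec) : 'cV[R]_n := \col_(i < n) y i.

Lemma sumR_big n f : sumR n f = (\sum_(i < n) f i)%R.
Proof. elim: n => [|n IH] /=; first by rewrite big_ord0. by rewrite big_ord_recr /= IH. Qed.

Lemma mx_mmul n A B : mx n (mmul n A B) = (mx n A *m mx n B)%R.
Proof. apply/matrixP=> i j; rewrite !mxE /mmul sumR_big; apply: eq_bigr => k _; by rewrite !mxE. Qed.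

Lemma cv_matvec n A y : cv n (mat_vec n A y) = (mx n A *m cv n y)%R.
Proof. apply/matrixP=> i j; rewrite !mxE /mat_vec sumR_big; apply: eq_bigr => k _; by rewrite !mxE. Qed.

Lemma pow_expr (x : R) k : x ^ k = (x ^+ k)%R.
Proof. elim: k => [|k IH] //=. by rewrite GRing.exprS IH. Qed.

Lemma ltb_ltn a b : (a <? b)%nat = (a < b)%N.
Proof. case: (Nat.ltb_spec a b) => H; apply/esym; [apply/ltP|apply/negbTE/negP=>/ltP]; lia. Qed.

Lemma minor_mx n (i j : 'I_n) A :
  mx n.-1 (minor i j A) = row' i (col' j (mx n A)).
Proof.
apply/matrixP=> r c; rewrite !mxE /minor !ltb_ltn /= /bump.
case: (ltnP r i) => Hr; case: (ltnP c j) => Hc /=; rewrite ?add0n ?add1n //.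
Qed.

Lemma det_mx n A : det n A = (\det (mx n A))%R.
Proof.
elim: n A => [|m IH] A; first by rewrite det_mx00.
have -> : det m.+1 A = sumR m.+1 (fun j => (-1) ^ j * A 0%nat j * det m (minor 0 j A)) by [].
rewrite (expand_det_row _ ord0) sumR_big; apply: eq_bigr => j _.
rewrite IH /matrix.cofactor. rewrite -(minor_mx m.+1 ord0 j A) !mxE pow_expr /= add0n.
by rewrite GRing.mulrCA GRing.mulrA.
Qed.

Lemma inv_mx n B : det n B <> 0 -> mx n (inv n B) = invmx (mx n B).
Proof.
move=> H; have U : mx n B \in unitmx.
  by rewrite unitmxE GRing.unitfE -det_mx; apply/eqP.
rewrite /invmx U; apply/matrixP=> i j; rewrite !mxE /inv /cofactor det_mx.
rewrite Nat.sub_1_r [det n.-1 _]det_mx (minor_mx n j i B) pow_expr /matrix.cofactor -plusE /=. by [].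
Qed.

Open Scope R_scope.

Lemma sumR_ext n f g : (forall i, (i < n)%coq_nat -> f i = g i) -> sumR n f = sumR n g.
Proof. elim: n => [|n IH] H //=. rewrite (H n); last lia. rewrite IH //. move=> i Hi; apply: H; lia. Qed.

Lemma sumR_delta n k f : (k < n)%coq_nat -> sumR n (fun j => if (j =? k)%nat then f j else 0) = f k.
Proof.
elim: n => [|n IH] H /=; first lia.
case: (Nat.eq_dec k n) => [->|Hne].
- rewrite Nat.eqb_refl (sumR_ext _ _ (fun _ => 0)); last first.
    move=> i Hi; case: (Nat.eqb_spec i n) => //; lia.
  have -> : forall m, sumR m (fun _ => 0) = 0 by elim=> //= m ->; lra.
  lra.
- rewrite IH; last lia. case: (Nat.eqb_spec n k) => ?; [lia|lra].
Qed.

Lemma cv_eq n y z : cv n y = cv n z -> forall i, (i < n)%coq_nat -> y i = z i.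
Proof.
move=> E i Hi; have Hi' : (i < n)%N by apply/ltP.
have := congr1 (fun M : 'cV[R]_n => M (Ordinal Hi') ord0) E; by rewrite !mxE.
Qed.

Lemma unit_of_det n M : det n M <> 0 -> mx n M \in unitmx.
Proof. move=> H; by rewrite unitmxE GRing.unitfE -det_mx; apply/eqP. Qed.

Definition dk (n : nat) (x : Vec) (k : nat) : R :=
  if Nat.ltb k (Nat.sub n 1) then x k else - sumR (Nat.sub n 1) x.

Lemma Dmat_dk n x k j : Dmat n x k j = if (k =? j)%nat then exp (dk n x k) else 0.
Proof. rewrite /Dmat /dk; by case: (k =? j)%nat; case: (Nat.ltb k (Nat.sub n 1)). Qed.

Definition cB n v y := mat_vec n (Defs.inv n (colmat v)) y.

Lemma cv_diag n x y :
  cv n (fun k => exp (dk n x k) * y k) = (mx n (Dmat n x) *m cv n y)%R.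
Proof.
apply/matrixP=> i j; rewrite !mxE.
rewrite -(sumR_delta n i (fun k => exp (dk n x i) * y k)); last by apply/ltP.
rewrite sumR_big; apply: eq_bigr => k _; rewrite !mxE Dmat_dk.
case: (Nat.eqb_spec k i) => [E|H]; case: (Nat.eqb_spec i k) => H'; try lia.
  by rewrite E.
by rewrite GRing.mul0r.
Qed.

Lemma g2_formula n A v x y :
  det n (colmat v) <> 0 ->
  forall i, (i < n)%coq_nat ->
  mat_vec n (g2 n A v x) y i =
  sumR n (fun k => mmul n A (colmat v) i k * (exp (dk n x k) * cB n v y k)).
Proof.
move=> HB; apply: cv_eq.
rewrite cv_matvec /g2 !mx_mmul inv_mx // .
have -> : cv n (fun i => sumR n (fun k => mmul n A (colmat v) i k * (exp (dk n x k) * cB n v y k)))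
   = cv n (mat_vec n (mmul n A (colmat v)) (fun k => exp (dk n x k) * cB n v y k)) by [].
rewrite cv_matvec cv_diag /cB cv_matvec inv_mx // mx_mmul.
by rewrite !mulmxA.
Qed.

Lemma A_formula n A v y :
  det n (colmat v) <> 0 ->
  forall i, (i < n)%coq_nat ->
  mat_vec n A y i = sumR n (fun k => mmul n A (colmat v) i k * cB n v y k).
Proof.
move=> HB; apply: cv_eq.
have -> : cv n (fun i => sumR n (fun k => mmul n A (colmat v) i k * cB n v y k))
   = cv n (mat_vec n (mmul n A (colmat v)) (cB n v y)) by [].
rewrite !cv_matvec /cB ?cv_matvec inv_mx // mx_mmul.
by rewrite -mulmxA (mulmxA (mx n (colmat v))) mulmxV ?mul1mx // unit_of_det.
Qed.

Lemma cB_basis n v k :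
  det n (colmat v) <> 0 -> (k < n)%coq_nat ->
  forall j, (j < n)%coq_nat -> cB n v (toR (v k)) j = if (j =? k)%nat then 1 else 0.
Proof.
move=> HB Hk; apply: cv_eq; rewrite /cB cv_matvec inv_mx //.
have -> : cv n (toR (v k)) = (mx n (colmat v) *m cv n (fun j => if (j =? k)%nat then 1 else 0))%R.
  apply/matrixP=> i j; rewrite !mxE /toR.
  rewrite -(sumR_delta n k (fun l => IZR (v l i))) // sumR_big; apply: eq_bigr => l _.
  rewrite !mxE /colmat; case: (Nat.eqb_spec l k) => _; by rewrite ?GRing.mulr1 ?GRing.mulr0.
by rewrite mulKmx // unit_of_det.
Qed.

Lemma invA_formula n A y : det n A <> 0 ->
  forall i, (i < n)%coq_nat -> y i = mat_vec n (Defs.inv n A) (mat_vec n A y) i.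
Proof.
move=> HA; apply: cv_eq. by rewrite !cv_matvec inv_mx // mulKmx // unit_of_det.
Qed.

Lemma cB_formula n A v y : det n A <> 0 -> det n (colmat v) <> 0 ->
  forall i, (i < n)%coq_nat -> cB n v y i =
    mat_vec n (mmul n (Defs.inv n (colmat v)) (Defs.inv n A)) (mat_vec n A y) i.
Proof.
move=> HA HB; apply: cv_eq.
rewrite /cB !cv_matvec mx_mmul !inv_mx //.
by rewrite -mulmxA (mulmxA (invmx (mx n A))) mulVmx ?mul1mx // unit_of_det.
Qed.

Lemma indep_det m v : lin_indep m.+1 v -> det m.+1 (colmat v) <> 0.
Proof.
move=> Hi Hd; move/eqP: Hd; rewrite det_mx -det_tr => /det0P [w nz E].
pose c := fun k => if (k < m.+1)%N then w ord0 (inord k) else 0.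
have Hc : forall k, (k < m.+1)%coq_nat -> c k = 0.
  apply: Hi => i Hi; have Hi' : (i < m.+1)%N by apply/ltP.
  have := congr1 (fun M : 'rV[R]_m.+1 => M ord0 (Ordinal Hi')) E.
  rewrite !mxE sumR_big => H; rewrite -[X in _ = X]H; apply: eq_bigr => k _.
  by rewrite !mxE /c ltn_ord inord_val.
case/eqP: nz; apply/matrixP=> i j; rewrite !mxE (ord1 i).
have := Hc j (ltP (ltn_ord j)); by rewrite /c ltn_ord inord_val.
Qed.

Open Scope R_scope.

Lemma sumR_nonneg n f : (forall i, (i < n)%coq_nat -> 0 <= f i) -> 0 <= sumR n f.
Proof. elim: n => [|n IH] H /=; first lra. have := H n ltac:(lia). have := IH ltac:(move=> i Hi; apply: H; lia). lra. Qed.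

Lemma sumR_term_le n f k : (forall i, (i < n)%coq_nat -> 0 <= f i) -> (k < n)%coq_nat -> f k <= sumR n f.
Proof.
elim: n => [|n IH] H Hk /=; first lia.
have H0 : 0 <= sumR n f by apply: sumR_nonneg => i Hi; apply: H; lia.
have Hn := H n ltac:(lia).
case: (Nat.eq_dec k n) => [->|Hne]; first lra.
have := IH ltac:(move=> i Hi; apply: H; lia) ltac:(lia). lra.
Qed.

Lemma sumR_le n f g : (forall i, (i < n)%coq_nat -> f i <= g i) -> sumR n f <= sumR n g.
Proof. elim: n => [|n IH] H /=; first lra. have := H n ltac:(lia). have := IH ltac:(move=> i Hi; apply: H; lia). lra. Qed.

Lemma sumR_abs n f : Rabs (sumR n f) <= sumR n (fun i => Rabs (f i)).
Proof. elim: n => [|n IH] /=; first by rewrite Rabs_R0; lra.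
have := Rabs_triang (sumR n f) (f n). lra. Qed.

Lemma sumR_plus n f g : sumR n (fun i => f i + g i) = sumR n f + sumR n g.
Proof. elim: n => [|n IH] /=; first lra. rewrite IH; lra. Qed.

Lemma sumR_opp n f : sumR n (fun i => - f i) = - sumR n f.
Proof. elim: n => [|n IH] /=; first lra. rewrite IH; lra. Qed.

Lemma sumR_scal n c f : sumR n (fun i => c * f i) = c * sumR n f.
Proof. elim: n => [|n IH] /=; first lra. rewrite IH; lra. Qed.

Lemma sumR_const n c : sumR n (fun _ => c) = INR n * c.
Proof. elim: n => [|n IH]; first by rewrite /=; lra. rewrite S_INR /= IH; lra. Qed.

Lemma vnorm_nonneg n z : 0 <= vnorm n z.
Proof. apply: sqrt_pos. Qed.

Lemma sq_nonneg (a : R) : 0 <= a ^ 2.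
Proof. have := pow2_ge_0 a. lra. Qed.

Lemma vnorm_sq n z : vnorm n z ^ 2 = sumR n (fun i => z i ^ 2).
Proof. rewrite /vnorm /= Rmult_1_r sqrt_sqrt //. apply: sumR_nonneg => i _; apply: sq_nonneg. Qed.

Lemma coord_le_vnorm n z k : (k < n)%coq_nat -> Rabs (z k) <= vnorm n z.
Proof.
move=> Hk; rewrite /vnorm -sqrt_Rsqr_abs; apply: sqrt_le_1_alt.
rewrite /Rsqr (_ : z k * z k = z k ^ 2); last by rewrite /=; lra.
apply: (sumR_term_le n (fun i => z i ^ 2)) => // i _; apply: sq_nonneg.
Qed.

Lemma vnorm_scale n a z : vnorm n (fun i => a * z i) = Rabs a * vnorm n z.
Proof.
rewrite /vnorm (sumR_ext _ _ (fun i => a ^ 2 * z i ^ 2)); last by move=> i _; rewrite /=; ring.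
rewrite sumR_scal sqrt_mult; [|apply: sq_nonneg|apply: sumR_nonneg => i _; apply: sq_nonneg].
by rewrite /= Rmult_1_r sqrt_Rsqr_abs.
Qed.

Lemma sumR_bound n a b beta : (forall k, (k < n)%coq_nat -> Rabs (b k) <= beta) ->
  Rabs (sumR n (fun k => a k * b k)) <= sumR n (fun k => Rabs (a k)) * beta.
Proof.
move=> H; apply: Rle_trans (sumR_abs _ _) _.
rewrite Rmult_comm -sumR_scal; apply: sumR_le => k Hk.
rewrite Rabs_mult Rmult_comm; apply: Rmult_le_compat_r; [apply: Rabs_pos|exact: H].
Qed.

Lemma row_bound n P : exists C, 0 <= C /\
  forall z k, (k < n)%coq_nat -> Rabs (mat_vec n P z k) <= C * vnorm n z.
Proof.
exists (sumR n (fun k => sumR n (fun j => Rabs (P k j)))); split.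
  apply: sumR_nonneg => i _; apply: sumR_nonneg => j _; apply: Rabs_pos.
move=> z k Hk; rewrite /mat_vec.
apply: Rle_trans (sumR_bound _ _ _ (vnorm n z) _) _.
  move=> j Hj; exact: coord_le_vnorm.
apply: Rmult_le_compat_r; first exact: vnorm_nonneg.
apply: (sumR_term_le n (fun k => sumR n (fun j => Rabs (P k j)))) => // i _.
apply: sumR_nonneg => j _; apply: Rabs_pos.
Qed.

Lemma mat_vec_ext n M y z : (forall i, (i < n)%coq_nat -> y i = z i) ->
  forall i, mat_vec n M y i = mat_vec n M z i.
Proof. move=> H i; apply: sumR_ext => j Hj; by rewrite H. Qed.

Lemma vnorm_ext n y z : (forall i, (i < n)%coq_nat -> y i = z i) -> vnorm n y = vnorm n z.
Proof. move=> H; rewrite /vnorm (sumR_ext _ _ (fun i => z i ^ 2)) // => i Hi; by rewrite H. Qed.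

Lemma lv_zeqv n M u w : zeqv n u w -> lv n M u = lv n M w.
Proof. move=> H; rewrite /lv; apply: vnorm_ext => i _; apply: mat_vec_ext => j Hj; by rewrite /toR H. Qed.

Lemma lv_zopp n M u : lv n M (zopp u) = lv n M u.
Proof.
rewrite /lv (vnorm_ext _ _ (fun i => (-1) * mat_vec n M (toR u) i)).
  by rewrite vnorm_scale Rabs_Ropp Rabs_R1 Rmult_1_l.
move=> i _; rewrite /mat_vec -sumR_scal; apply: sumR_ext => j _.
rewrite /toR /zopp opp_IZR; ring.
Qed.

Lemma lv_nonneg n M u : 0 <= lv n M u.
Proof. exact: vnorm_nonneg. Qed.

Lemma exp_le' x y : x <= y -> exp x <= exp y.
Proof. case/Rle_lt_or_eq_dec => [h|->]; [have := exp_increasing _ _ h; lra|lra]. Qed.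

Lemma exp_bound d r : Rabs d <= r -> Rabs (exp d - 1) <= exp r - 1.
Proof.
move=> H.
case: (Rle_lt_dec 0 d) => Hd.
- have E1 : 1 <= exp d by rewrite -exp_0; apply: exp_le'.
  rewrite Rabs_right; last lra.
  rewrite Rabs_right in H; last lra.
  have : exp d <= exp r by apply: exp_le'.
  lra.
- have E1 : exp d < 1 by rewrite -exp_0; apply: exp_increasing.
  rewrite Rabs_left1; last lra.
  rewrite Rabs_left in H; last lra.
  have E : exp d * exp (-d) = 1 by rewrite -exp_plus Rplus_opp_r exp_0.
  have : exp (- d) <= exp r by apply: exp_le'.
  have P1 := exp_pos d.
  nra.
Qed.

Lemma min_index n (f : nat -> R) : (0 < n)%coq_nat ->
  exists k, (k < n)%coq_nat /\ forall j, (j < n)%coq_nat -> f k <= f j.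
Proof.
elim: n => [|n IH] H; first lia.
case: (Nat.eq_dec n 0) => [->|Hn].
  exists 0%nat; split; first lia. move=> j Hj; have -> : j = 0%nat by lia. lra.
have [k [Hk Hm]] := IH ltac:(lia).
case: (Rle_lt_dec (f k) (f n)) => Hc.
- exists k; split; first lia. move=> j Hj; case: (Nat.eq_dec j n) => [->|?] //; apply: Hm; lia.
- exists n; split; first lia. move=> j Hj; case: (Nat.eq_dec j n) => [->|?]; first lra.
  have := Hm j ltac:(lia); lra.
Qed.

Open Scope R_scope.

Lemma perturb n (W : Mat) (c e : nat -> R) Cc Ws mu L :
  0 <= Cc -> 0 <= Ws -> 0 <= mu <= 1 -> 0 <= L ->
  (forall k, (k < n)%coq_nat -> Rabs (c k) <= Cc * L) ->
  (forall k, (k < n)%coq_nat -> Rabs (e k - 1) <= mu) ->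
  (forall i, (i < n)%coq_nat -> sumR n (fun k => Rabs (W i k)) <= Ws) ->
  sumR n (fun i => (sumR n (fun k => W i k * (e k * c k))) ^ 2) >=
  sumR n (fun i => (sumR n (fun k => W i k * c k)) ^ 2) - INR n * (3 * Ws ^ 2 * Cc ^ 2 * mu * L ^ 2).
Proof.
move=> HC HW Hmu HL Hc He HWs.
rewrite -sumR_const /Rminus -sumR_opp -sumR_plus; apply: Rle_ge; apply: sumR_le => i Hi.
set p := sumR n (fun k => W i k * (e k * c k)).
set q := sumR n (fun k => W i k * c k).
have Hd : p - q = sumR n (fun k => W i k * ((e k - 1) * c k)).
  rewrite /p /q /Rminus -sumR_opp -sumR_plus; apply: sumR_ext => k _; ring.
have Hs : p + q = sumR n (fun k => W i k * ((e k + 1) * c k)).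
  rewrite /p /q -sumR_plus; apply: sumR_ext => k _; ring.
have CL : 0 <= Cc * L by apply: Rmult_le_pos.
have B1 : Rabs (p - q) <= Ws * (mu * (Cc * L)).
  rewrite Hd; apply: Rle_trans (sumR_bound _ _ _ (mu * (Cc * L)) _) _.
    move=> k Hk; rewrite Rabs_mult; apply: Rmult_le_compat; try apply: Rabs_pos; auto.
  apply: Rmult_le_compat_r; last exact: HWs.
  apply: Rmult_le_pos; lra.
have B2 : Rabs (p + q) <= Ws * (3 * (Cc * L)).
  rewrite Hs; apply: Rle_trans (sumR_bound _ _ _ (3 * (Cc * L)) _) _.
    move=> k Hk; rewrite Rabs_mult; apply: Rmult_le_compat; try apply: Rabs_pos; auto.
    have := He k Hk; have := Rabs_triang (e k - 1) 2. rewrite (Rabs_right 2); last lra.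
    rewrite (_ : e k - 1 + 2 = e k + 1); last ring. lra.
  apply: Rmult_le_compat_r; last exact: HWs.
  lra.
have : Rabs (p - q) * Rabs (p + q) <= (Ws * (mu * (Cc * L))) * (Ws * (3 * (Cc * L))).
  apply: Rmult_le_compat; try apply: Rabs_pos; auto.
rewrite -Rabs_mult => H.
have H2 := Rle_abs (- ((p - q) * (p + q))). rewrite Rabs_Ropp in H2.
have -> : p ^ 2 = q ^ 2 + (p - q) * (p + q) by ring.
have -> : 3 * Ws ^ 2 * Cc ^ 2 * mu * L ^ 2 = Ws * (mu * (Cc * L)) * (Ws * (3 * (Cc * L))) by ring.
lra.
Qed.

Definition upd (u : ZVec) (k : nat) (z : Z) : ZVec := fun i => if (i =? k)%nat then z else u i.
Definition zrange (N : Z) : list Z := List.map (fun k => Z.sub (Z.of_nat k) N) (List.seq 0 (Z.to_nat (Z.mul 2 N))).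
Fixpoint boxL (N : Z) (n : nat) : list ZVec :=
  match n with
  | O => (fun _ => Z0) :: nil
  | S m => List.flat_map (fun u => List.map (fun z => upd u m z) (zrange N)) (boxL N m)
  end.

Lemma zrange_in N z : (Z.lt (Z.opp N) z /\ Z.lt z N) -> In z (zrange N).
Proof.
move=> H; apply/in_map_iff; exists (Z.to_nat (Z.add z N)); split; first lia.
apply/in_seq; lia.
Qed.

Lemma boxL_spec N n u : (forall i, (i < n)%coq_nat -> (Z.lt (Z.opp N) (u i) /\ Z.lt (u i) N)) ->
  exists w, In w (boxL N n) /\ zeqv n w u.
Proof.
elim: n u => [|n IH] u H.
  exists (fun _ => Z0); split; [by left| move=> i Hi; lia].
have [w [Hw Hz]] := IH u ltac:(move=> i Hi; apply: H; lia).
exists (upd w n (u n)); split.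
  apply/in_flat_map; exists w; split => //; apply/in_map_iff; exists (u n); split => //.
  apply: zrange_in; apply: H; lia.
move=> i Hi; rewrite /upd; case: (Nat.eqb_spec i n) => [->//|Hne]; apply: Hz; lia.
Qed.

Lemma list_min (P : ZVec -> Prop) (f : ZVec -> R) (lam : R) (L : list ZVec) :
  (forall u, P u -> lam < f u) ->
  exists m, lam < m /\ forall u, In u L -> P u -> m <= f u.
Proof.
move=> H; elim: L => [|a L [m [Hm HL]]].
  exists (lam + 1); split; [lra| move=> u []].
case: (classic (P a)) => Pa.
- exists (Rmin m (f a)); split; first by apply: Rmin_glb_lt => //; apply: H.
  move=> u [<-|Hu] Pu; first by apply: Rmin_r.
  apply: Rle_trans (Rmin_l _ _) (HL u Hu Pu).
- exists m; split => // u [<-|Hu] Pu //; exact: HL.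
Qed.

Open Scope R_scope.

Definition good (n : nat) (v : nat -> ZVec) (u : ZVec) : Prop :=
  nonzeroZ n u /\ forall k, (k < n)%coq_nat -> ~ zeqv n u (v k) /\ ~ zeqv n u (zopp (v k)).

Lemma good_zeqv n v u w : zeqv n w u -> good n v u -> good n v w.
Proof.
move=> E [[i [Hi Hu]] Hk]; split.
  exists i; split => //; by rewrite E.
move=> k Hk'; have [H1 H2] := Hk k Hk'; split => H; [apply: H1|apply: H2] => j Hj; rewrite -E //; exact: H.
Qed.

Lemma not_good n v u : nonzeroZ n u -> ~ good n v u ->
  exists k, (k < n)%coq_nat /\ (zeqv n u (v k) \/ zeqv n u (zopp (v k))).
Proof.
move=> Hu Hg; apply: NNPP => Hn; apply: Hg; split => // k Hk; split => H; apply: Hn; exists k; tauto.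
Qed.

Lemma sumR_lower n a f : (forall j, (j < n)%coq_nat -> a <= f j) -> INR n * a <= sumR n f.
Proof. move=> H; rewrite -sumR_const; exact: sumR_le. Qed.

Lemma sum_dk m x : sumR m.+1 (dk m.+1 x) = 0.
Proof.
have E : forall k, dk m.+1 x k = if Nat.ltb k m then x k else - sumR m x.
  move=> k; by rewrite /dk Nat.sub_succ Nat.sub_0_r.
rewrite /= (sumR_ext _ _ x); last first.
  move=> i Hi; rewrite E; case: (Nat.ltb_spec i m) => //; lia.
rewrite E; case: (Nat.ltb_spec m m) => ?; [lia|lra].
Qed.

Lemma dk_scale n t x k : dk n (vscale t x) k = t * dk n x k.
Proof. rewrite /dk /vscale; case: (Nat.ltb k (Nat.sub n 1)) => //. rewrite sumR_scal; ring. Qed.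

Lemma Rabs_exp (d : R) : Rabs (exp d) = exp d.
Proof. apply: Rabs_right; have := exp_pos d; lra. Qed.

Lemma lv_g2_basis n A v x k : det n (colmat v) <> 0 -> (k < n)%coq_nat ->
  lv n (g2 n A v x) (v k) = exp (dk n x k) * lv n A (v k).
Proof.
move=> HB Hk; rewrite /lv -(Rabs_exp (dk n x k)) -vnorm_scale; apply: vnorm_ext => i Hi.
rewrite g2_formula // (A_formula n A v) // (sumR_ext _ _ (fun j => if (j =? k)%nat then mmul n A (colmat v) i j * exp (dk n x k) else 0)); last first.
  move=> j Hj; rewrite cB_basis //; case: (Nat.eqb_spec j k) => [->|_]; ring.
rewrite sumR_delta // (sumR_ext _ _ (fun j => if (j =? k)%nat then mmul n A (colmat v) i j else 0)); last first.
  move=> j Hj; rewrite cB_basis //; case: (Nat.eqb_spec j k) => _; ring.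
rewrite sumR_delta //; ring.
Qed.

Lemma lv_g2_pm n A v x k w : det n (colmat v) <> 0 -> (k < n)%coq_nat ->
  (zeqv n w (v k) \/ zeqv n w (zopp (v k))) ->
  lv n (g2 n A v x) w = exp (dk n x k) * lv n A (v k).
Proof.
move=> HB Hk [E|E]; rewrite (lv_zeqv _ _ _ _ E) ?lv_zopp; exact: lv_g2_basis.
Qed.

Open Scope R_scope.

Lemma coord_bound n A : det n A <> 0 -> exists Ca, 0 <= Ca /\
  forall y i, (i < n)%coq_nat -> Rabs (y i) <= Ca * vnorm n (mat_vec n A y).
Proof.
move=> HA; have [C [HC H]] := row_bound n (Defs.inv n A); exists C; split => // y i Hi.
rewrite (invA_formula n A y HA i Hi); exact: H.
Qed.

Lemma gap_lemma n A v lam : det n A <> 0 -> 0 < lam ->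
  (forall u, good n v u -> lam < lv n A u) ->
  exists lam2, lam < lam2 /\ forall u, good n v u -> lam2 <= lv n A u.
Proof.
move=> HA Hl Hg.
have [Ca [HCa HCb]] := coord_bound n A HA.
set N := up (Ca * (2 * lam)).
have [m [Hm HL]] := list_min (good n v) (lv n A) lam (boxL N n) Hg.
exists (Rmin (2 * lam) m); split; first by apply: Rmin_glb_lt; lra.
move=> u Hu.
case: (Rle_lt_dec (lv n A u) (2 * lam)) => Hc; last by have := Rmin_l (2 * lam) m; lra.
have Hbox : forall i, (i < n)%coq_nat -> (Z.lt (Z.opp N) (u i) /\ Z.lt (u i) N).
  move=> i Hi; have := HCb (toR u) i Hi; rewrite /toR -/(lv n A u) => Hb.
  have Hb2 : Rabs (IZR (u i)) <= Ca * (2 * lam) by apply: Rle_trans Hb _; apply: Rmult_le_compat_l.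
  have [HN1 _] := archimed (Ca * (2 * lam)); rewrite -/N in HN1.
  move: Hb2; rewrite /Rabs; case: Rcase_abs => Hs Hb2; split; apply: lt_IZR; rewrite ?opp_IZR; lra.
have [w [Hw Hz]] := boxL_spec N n u Hbox.
rewrite -(lv_zeqv _ _ _ _ Hz); apply: Rle_trans (Rmin_r _ _) _.
apply: HL => //; exact: good_zeqv Hz Hu.
Qed.

Lemma dk_bound n x k : (1 <= n)%coq_nat -> Rabs (dk n x k) <= INR n * vnorm (n - 1)%coq_nat x.
Proof.
move=> Hn; have Hv := vnorm_nonneg (n - 1)%coq_nat x.
have Hn1 : 1 <= INR n by apply: (le_INR 1).
rewrite /dk; case: (Nat.ltb_spec k (n - 1)%coq_nat) => Hk.
- apply: Rle_trans (coord_le_vnorm _ _ _ Hk) _; nra.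
- rewrite Rabs_Ropp; apply: Rle_trans (sumR_abs _ _) _.
  apply: Rle_trans (_ : _ <= sumR (n - 1)%coq_nat (fun _ => vnorm (n - 1)%coq_nat x)) _.
    apply: sumR_le => i Hi; exact: coord_le_vnorm.
  rewrite sumR_const; apply: Rmult_le_compat_r => //; apply: le_INR; lia.
Qed.

Lemma key_small n A v lam lam2 : (1 <= n)%coq_nat ->
  det n (colmat v) <> 0 -> det n A <> 0 -> 0 < lam -> lam < lam2 ->
  (forall u, good n v u -> lam2 <= lv n A u) ->
  exists eps, eps > 0 /\ forall x, vnorm (n - 1)%coq_nat x < eps ->
    forall u, good n v u -> lam < lv n (g2 n A v x) u.
Proof.
move=> Hn HB HA Hl Hl2 Hgap.
have [Cc [HCc HCb]] := row_bound n (mmul n (Defs.inv n (colmat v)) (Defs.inv n A)).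
set W := mmul n A (colmat v).
set Ws := sumR n (fun i => sumR n (fun k => Rabs (W i k))).
have HWs : forall i, (i < n)%coq_nat -> sumR n (fun k => Rabs (W i k)) <= Ws.
  move=> i Hi; apply: (sumR_term_le n (fun i => sumR n (fun k => Rabs (W i k)))) => // j _.
  apply: sumR_nonneg => k _; apply: Rabs_pos.
have HWs0 : 0 <= Ws by apply: sumR_nonneg => j _; apply: sumR_nonneg => k _; apply: Rabs_pos.
set K := 3 * INR n * Ws ^ 2 * Cc ^ 2 + 1.
have HK : 1 <= K.
  have : 0 <= 3 * INR n * Ws ^ 2 * Cc ^ 2.
    repeat apply: Rmult_le_pos; try apply: sq_nonneg; try apply: pos_INR; lra.
  rewrite /K; lra.
set r := lam / lam2.
have Hr0 : 0 < r by apply: Rdiv_lt_0_compat; lra.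
have Hr1 : r < 1.
  have E : r * lam2 = lam by rewrite /r; field; lra.
  nra.
set delta := 1 - r ^ 2.
have Hdelta : 0 < delta by rewrite /delta; nra.
set tau := Rmin 1 (delta / (2 * K)).
have Htau0 : 0 < tau by apply: Rmin_glb_lt; [lra|apply: Rdiv_lt_0_compat; lra].
have Htau1 : tau <= 1 by apply: Rmin_l.
have HKtau : K * tau <= delta / 2.
  have := Rmin_r 1 (delta / (2 * K)); rewrite -/tau => H.
  have -> : delta / 2 = K * (delta / (2 * K)) by field; lra.
  apply: Rmult_le_compat_l => //; lra.
have Hn1 : 1 <= INR n by apply: (le_INR 1).
have Hln : 0 < ln (1 + tau) by rewrite -ln_1; apply: ln_increasing; lra.
exists (ln (1 + tau) / INR n); split; first by apply: Rdiv_lt_0_compat; lra.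
move=> x Hx u Hu.
have He : forall k, (k < n)%coq_nat -> Rabs (exp (dk n x k) - 1) <= tau.
  move=> k Hk; have := exp_bound (dk n x k) (ln (1 + tau)).
  rewrite exp_ln; last lra. move=> H; have : tau = 1 + tau - 1 by ring. move=> ->; apply: H.
  apply: Rle_trans (dk_bound n x k Hn) _.
  have -> : ln (1 + tau) = INR n * (ln (1 + tau) / INR n) by field; lra.
  apply: Rmult_le_compat_l; lra.
set L := lv n A u.
have HL : lam2 <= L by exact: Hgap.
have Hc : forall k, (k < n)%coq_nat -> Rabs (cB n v (toR u) k) <= Cc * L.
  move=> k Hk; rewrite (cB_formula n A v (toR u) HA HB k Hk); exact: HCb.
have Hp := perturb n W (cB n v (toR u)) (fun k => exp (dk n x k)) Cc Ws tau L HCc HWs0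
  ltac:(lra) ltac:(lra) Hc He HWs.
have Eg : (lv n (g2 n A v x) u) ^ 2 = sumR n (fun i => (sumR n (fun k => W i k * (exp (dk n x k) * cB n v (toR u) k))) ^ 2).
  rewrite /lv vnorm_sq; apply: sumR_ext => i Hi; by rewrite g2_formula.
have EA : L ^ 2 = sumR n (fun i => (sumR n (fun k => W i k * cB n v (toR u) k)) ^ 2).
  rewrite /L /lv vnorm_sq; apply: sumR_ext => i Hi; by rewrite (A_formula n A v).
rewrite -Eg -EA in Hp.
have H3 : INR n * (3 * Ws ^ 2 * Cc ^ 2 * tau * L ^ 2) <= K * tau * L ^ 2.
  have -> : K * tau * L ^ 2 = (3 * INR n * Ws ^ 2 * Cc ^ 2) * (tau * L ^ 2) + tau * L ^ 2 by rewrite /K; ring.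
  have : 0 <= tau * L ^ 2 by apply: Rmult_le_pos; [lra|apply: sq_nonneg].
  have -> : INR n * (3 * Ws ^ 2 * Cc ^ 2 * tau * L ^ 2) = (3 * INR n * Ws ^ 2 * Cc ^ 2) * (tau * L ^ 2) by ring.
  lra.
have HL2 : lam2 ^ 2 <= L ^ 2 by apply: pow_incr; lra.
have Hrl : lam = r * lam2 by rewrite /r; field; lra.
have Hg0 := lv_nonneg n (g2 n A v x) u.
have Hfin : lam ^ 2 < (lv n (g2 n A v x) u) ^ 2.
  have : K * tau * L ^ 2 <= delta / 2 * L ^ 2 by apply: Rmult_le_compat_r; [apply: sq_nonneg|lra].
  rewrite Hrl /delta in Hdelta * => H4.
  have Hl22 : 0 < lam2 ^ 2 by apply: pow_lt; lra.
  nra.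
nra.
Qed.

Open Scope R_scope.

Lemma fold_coeffs n A v x (l : list (R * ZVec)) :
  det n (colmat v) <> 0 ->
  (forall w, in_S1 n (g2 n A v x) w -> exists k, (k < n)%coq_nat /\
      (zeqv n w (v k) \/ zeqv n w (zopp (v k))) /\ forall j, (j < n)%coq_nat -> dk n x k <= dk n x j) ->
  Forall (fun p => in_S1 n (g2 n A v x) (snd p)) l ->
  exists c : nat -> R, (forall k, (k < n)%coq_nat -> c k <> 0 -> forall j, (j < n)%coq_nat -> dk n x k <= dk n x j) /\
    forall i, (i < n)%coq_nat ->
      fold_right (fun p acc => fst p * IZR (snd p i) + acc) 0 l = sumR n (fun k => c k * IZR (v k i)).
Proof.
move=> HB Hinc; elim: l => [|[a w] l IH] HF.
  exists (fun _ => 0); split; first by move=> k _ H; lra.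
  move=> i _ /=; rewrite (sumR_ext _ _ (fun _ => 0)); last by move=> *; ring.
  rewrite sumR_const; ring.
inversion HF as [|p l' Hp HF']; subst.
have [c [Hc Hs]] := IH HF'.
have [k [Hk [Hpm Hmin]]] := Hinc w Hp.
set s : R := if excluded_middle_informative (zeqv n w (v k)) then 1 else -1.
exists (fun j => c j + (if (j =? k)%nat then s * a else 0)); split.
  move=> j Hj; case: (Nat.eqb_spec j k) => [->|Hjk] => Hne; first exact: Hmin.
  by apply: Hc => //; rewrite Rplus_0_r in Hne.
move=> i Hi.
change (a * IZR (w i) + fold_right (fun p acc => fst p * IZR (snd p i) + acc) 0 l = sumR n (fun j => (c j + (if (j =? k)%nat then s * a else 0)) * IZR (v j i))).
rewrite Hs //.
rewrite [RHS](sumR_ext _ _ (fun j => c j * IZR (v j i) + (if (j =? k)%nat then s * a * IZR (v j i) else 0))); last first.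
  move=> j _; case: (Nat.eqb_spec j k) => _; ring.
rewrite sumR_plus sumR_delta //.
have -> : IZR (w i) = s * IZR (v k i).
  rewrite /s; case: excluded_middle_informative => H /=.
    rewrite H //; ring.
  case: Hpm => // H'; rewrite H' // /zopp opp_IZR; ring.
ring.
Qed.

Open Scope R_scope.

Lemma dk_lt m x k : (k < m)%coq_nat -> dk m.+1 x k = x k.
Proof. move=> Hk; rewrite /dk Nat.sub_succ Nat.sub_0_r; case: (Nat.ltb_spec k m) => //; lia. Qed.

Lemma dk_last m x : dk m.+1 x m = - sumR m x.
Proof. rewrite /dk Nat.sub_succ Nat.sub_0_r; case: (Nat.ltb_spec m m) => //; lia. Qed.

Theorem mainTheorem12 (n : nat) (Hn : (2 <= n)%coq_nat) (A : Mat) (v : nat -> ZVec)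
  (HA_SL : det n A = 1)
  (HA_X : well_rounded n A)
  (Hindep : lin_indep n v)
  (HS1 : forall w : ZVec, in_S1 n A w <->
          exists k, (k < n)%coq_nat /\ (zeqv n w (v k) \/ zeqv n w (zopp (v k)))) :
  exists eps : R, eps > 0 /\
    forall x : Vec, vnorm (n - 1)%coq_nat x < eps ->
      (well_rounded n (g2 n A v x) <-> (forall i, (i < n - 1)%coq_nat -> x i = 0)) /\
      ((exists i, (i < n - 1)%coq_nat /\ x i <> 0) ->
        forall w : ZVec, in_S1 n (g2 n A v x) w ->
          forall e : R, e > 0 -> exists T : R, forall t : R, t > T ->
            Rabs (lv n (g2 n A v (vscale t x)) w) < e).
Proof.
destruct n as [|m]; first lia.
have HB : det m.+1 (colmat v) <> 0 := indep_det m v Hindep.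
have HA : det m.+1 A <> 0 by rewrite HA_SL; lra.
have Hvk : forall k, (k < m.+1)%coq_nat -> in_S1 m.+1 A (v k).
  by move=> k Hk; apply/HS1; exists k; split; [done|left; move=> i _].
set lam := lv m.+1 A (v 0%nat).
have Hlamk : forall k, (k < m.+1)%coq_nat -> lv m.+1 A (v k) = lam.
  move=> k Hk; have [Hk1 Hk2] := Hvk k Hk; have [H01 H02] := Hvk 0%nat ltac:(lia).
  have := Hk2 _ H01; have := H02 _ Hk1; rewrite /lam; lra.
have Hnz : forall k, (k < m.+1)%coq_nat -> nonzeroZ m.+1 (v k) by move=> k Hk; case: (Hvk k Hk).
have Hlam0 : 0 < lam.
  case: (Rlt_le_dec 0 lam) => // Hle; exfalso.
  have Hl0 : lam = 0 by have := lv_nonneg m.+1 A (v 0%nat); rewrite -/lam; lra.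
  have [Ca [HCa HCb]] := coord_bound m.+1 A HA.
  have [i [Hi Hv]] := Hnz 0%nat ltac:(lia).
  have := HCb (toR (v 0%nat)) i Hi; rewrite -/(lv m.+1 A (v 0%nat)) -/lam Hl0 Rmult_0_r /toR => H.
  apply: Hv; apply: eq_IZR; case: (Req_dec (IZR (v 0%nat i)) 0) => // Hne.
  have := Rabs_no_R0 _ Hne; have := Rabs_pos (IZR (v 0%nat i)); lra.
have Hgood : forall u, good m.+1 v u -> lam < lv m.+1 A u.
  move=> u [Hunz Hnot].
  have Hns : ~ in_S1 m.+1 A u.
    move/HS1 => [k [Hk [E|E]]]; have [H1 H2] := Hnot k Hk; [exact: H1|exact: H2].
  have [u' Hu'] : exists u', ~ (nonzeroZ m.+1 u' -> lv m.+1 A u <= lv m.+1 A u').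
    apply: not_all_ex_not => H; apply: Hns; split => //.
  have Hu'nz : nonzeroZ m.+1 u' by apply: NNPP => H; apply: Hu' => H'; contradiction.
  have Hlt : lv m.+1 A u' < lv m.+1 A u by apply: Rnot_le_lt => H; apply: Hu' => _.
  have := (Hvk 0%nat ltac:(lia)).2 u' Hu'nz; rewrite -/lam; lra.
have [lam2 [Hl2 Hgap]] := gap_lemma m.+1 A v lam HA Hlam0 Hgood.
have [eps [Heps Hkey]] := key_small m.+1 A v lam lam2 ltac:(lia) HB HA Hlam0 Hl2 Hgap.
have HnR : 0 < INR m.+1 by apply: lt_0_INR; lia.
have Hsum_le : forall x k, (forall j, (j < m.+1)%coq_nat -> dk m.+1 x k <= dk m.+1 x j) -> dk m.+1 x k <= 0.
  move=> x k H; have := sumR_lower m.+1 _ _ H; rewrite sum_dk; nra.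
exists eps; split => // x Hx.
have Hkey' := Hkey x Hx.
have Hinc : forall w, in_S1 m.+1 (g2 m.+1 A v x) w -> exists k, (k < m.+1)%coq_nat /\
      (zeqv m.+1 w (v k) \/ zeqv m.+1 w (zopp (v k))) /\
      forall j, (j < m.+1)%coq_nat -> dk m.+1 x k <= dk m.+1 x j.
  move=> w [Hwnz Hwmin].
  have [kmin [Hkmin Hmin]] := min_index m.+1 (dk m.+1 x) ltac:(lia).
  have Hd0 := Hsum_le x kmin Hmin.
  have Hvkmin : lv m.+1 (g2 m.+1 A v x) (v kmin) <= lam.
    rewrite lv_g2_basis // Hlamk //.
    have : exp (dk m.+1 x kmin) <= 1 by rewrite -exp_0; apply: exp_le'.
    nra.
  have Hw_le : lv m.+1 (g2 m.+1 A v x) w <= lam.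
    apply: Rle_trans (Hwmin (v kmin) (Hnz kmin Hkmin)) Hvkmin.
  case: (classic (good m.+1 v w)) => Hg; first by have := Hkey' w Hg; lra.
  have [k [Hk Hpm]] := not_good m.+1 v w Hwnz Hg.
  exists k; split => //; split => // j Hj.
  have := Hwmin (v j) (Hnz j Hj).
  rewrite (lv_g2_pm m.+1 A v x k w HB Hk Hpm) lv_g2_basis // !Hlamk // => H.
  case: (Rle_lt_dec (dk m.+1 x k) (dk m.+1 x j)) => // Hlt; exfalso.
  have := exp_increasing _ _ Hlt; nra.
split.
- split.
  + move=> HW.
    have Hall : forall j, (j < m.+1)%coq_nat -> forall k, (k < m.+1)%coq_nat -> dk m.+1 x j <= dk m.+1 x k.
      move=> j Hj.
      have [l [Hl Hy]] := HW (toR (v j)).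
      have [c [Hc Hs]] := fold_coeffs m.+1 A v x l HB Hinc Hl.
      case: (Req_dec (c j) 0) => Hcj; last exact: Hc j Hj Hcj.
      exfalso.
      have Hz : forall i, (i < m.+1)%coq_nat ->
          sumR m.+1 (fun k => (c k - (if (k =? j)%nat then 1 else 0)) * IZR (v k i)) = 0.
        move=> i Hi.
        rewrite (sumR_ext _ _ (fun k => c k * IZR (v k i) + - (if (k =? j)%nat then IZR (v k i) else 0))); last first.
          move=> k _; case: (Nat.eqb_spec k j) => _; ring.
        rewrite sumR_plus sumR_opp sumR_delta // -Hs // -Hy //; rewrite /toR; ring.
      have := Hindep _ Hz j Hj.
      rewrite Nat.eqb_refl; lra.
    move=> i Hi.
    have Hi' : (i < m)%coq_nat by move: Hi; rewrite subn1 /=; lia.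
    have Hxi : forall i, (i < m)%coq_nat -> x i = - sumR m x.
      move=> i0 Hi0; rewrite -(dk_lt m x i0) // -dk_last.
      apply: Rle_antisym; apply: Hall; lia.
    have Hs : sumR m x = INR m * (- sumR m x) by rewrite -sumR_const; apply: sumR_ext.
    have Hm0 := pos_INR m.
    have Hs0 : sumR m x = 0 by nra.
    rewrite Hxi // Hs0; lra.
  + move=> Hx0.
    have Hd0 : forall k, dk m.+1 x k = 0.
      move=> k; rewrite /dk; case: (Nat.ltb_spec k (m.+1 - 1)%coq_nat) => Hk; first exact: Hx0.
      rewrite (sumR_ext _ _ (fun _ => 0)); last exact: Hx0.
      rewrite sumR_const; ring.
    have Heq : forall u, lv m.+1 (g2 m.+1 A v x) u = lv m.+1 A u.
      move=> u; rewrite /lv; apply: vnorm_ext => i Hi.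
      rewrite g2_formula // (A_formula m.+1 A v) //; apply: sumR_ext => k _; rewrite Hd0 exp_0; ring.
    move=> y; have [l [Hl Hy]] := HA_X y; exists l; split => //.
    apply: Forall_impl Hl => p [Hp1 Hp2]; split => // u Hu; rewrite !Heq; exact: Hp2.
- move=> [i0 [Hi0 Hxi0]] w Hw e He.
  have [k [Hk [Hpm Hmin]]] := Hinc w Hw.
  have Hle := Hsum_le x k Hmin.
  have Hneg : dk m.+1 x k < 0.
    case: (Rle_lt_or_eq_dec _ _ Hle) => // Hz; exfalso; apply: Hxi0.
    have Hnn : forall j, (j < m.+1)%coq_nat -> 0 <= dk m.+1 x j by move=> j Hj; rewrite -Hz; exact: Hmin.
    have Hi0' : (i0 < m)%coq_nat by move: Hi0; rewrite subn1 /=; lia.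
    have := sumR_term_le m.+1 (dk m.+1 x) i0 Hnn ltac:(lia); rewrite sum_dk.
    have := Hnn i0 ltac:(lia); rewrite dk_lt; [lra|done].
  set d := dk m.+1 x k.
  move: Hneg; rewrite -/d => Hneg.
  have Hel : 0 < e / lam by apply: Rdiv_lt_0_compat; lra.
  exists (ln (e / lam) / d) => t Ht.
  rewrite (lv_g2_pm m.+1 A v (vscale t x) k w HB Hk Hpm) dk_scale Hlamk // -/d.
  have Hp : 0 < exp (t * d) * lam by apply: Rmult_lt_0_compat => //; apply: exp_pos.
  rewrite Rabs_right; last lra.
  have Htd : t * d < ln (e / lam).
    have -> : ln (e / lam) = ln (e / lam) / d * d by field; lra.
    nra.
  have := exp_increasing _ _ Htd; rewrite exp_ln //.
  move=> H; have -> : e = e / lam * lam by field; lra.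
  nra.
Qed.
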